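(* Let $f:X\to S$ be a morphism of fine log schemes of characteristic $p$. If $D=(\delta,\partial):(\mathcal M_X,\mathcal O_X)\to\mathcal O_X$ is a log derivation over $S$, then so is $D^{(p)}:=(\partial^{p-1}\circ\delta+F_X^*\circ\delta,\ \partial^{(p)})$.
   Context: A log derivation of $X$ over $S$ is a pair $(\delta,\partial)$ with $\partial:\mathcal O_X\to\mathcal O_X$ an $\mathcal O_S$-linear derivation and $\delta:\mathcal M_X\to\mathcal O_X$ a monoid homomorphism (to the additive group) vanishing on the image of $f^{-1}\mathcal M_S$ and satisfying $\partial(\alpha(m))=\alpha(m)\delta(m)$ for $m\in\mathcal M_X$. Here $\partial^{(p)}:=\partial^p$ (the $p$-fold iterate), $\partial^{p-1}\circ\delta$ is $m\mapsto\partial^{p-1}(\delta(m))$, and $F_X^*\circ\delta$ is $m\mapsto\delta(m)^p$. *)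

(* Defs.v *)
From HB Require Import structures.
From mathcomp Require Import all_boot all_order all_algebra.
Set Implicit Arguments. Unset Strict Implicit. Unset Printing Implicit Defensive.
Import GRing.Theory.
Local Open Scope ring_scope.

(* Ring-level (sections over an open / affine chart) model of a log structure:
   a commutative monoid M (written additively), a commutative ring A, and
   alpha : M -> the multiplicative monoid of A a monoid morphism such that alpha restricts to an
   isomorphism alpha^{-1}(A^x) -> A^x. *)
Definition is_log_structure (A : comUnitRingType) (M : nmodType) (alpha : M -> A) : Prop :=
  [/\ alpha 0 = 1,
      (forall m m', alpha (m + m') = alpha m * alpha m') &
      (forall u : A, u \is a GRing.unit -> exists! m : M, alpha m = u)].

(* integrality of the monoid (part of "fine") *)
Definition integral_monoid (M : nmodType) : Prop :=
  forall m a b : M, m + a = m + b -> a = b.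

(* A morphism of log rings (X -> S) : phi = f^# : O_S -> O_X,
   beta = f^b : f^{-1} M_S -> M_X, compatible with the structure maps. *)
Definition is_log_morphism (R A : comUnitRingType) (N M : nmodType)
  (phi : R -> A) (alphaS : N -> R) (alphaX : M -> A) (beta : N -> M) : Prop :=
  [/\ beta 0 = 0, (forall n n', beta (n + n') = beta n + beta n') &
      (forall n, alphaX (beta n) = phi (alphaS n))].

Definition is_log_derivation (R A : comUnitRingType) (N M : nmodType)
  (phi : R -> A) (alphaX : M -> A) (beta : N -> M)
  (delta : M -> A) (der : A -> A) : Prop :=
  [/\ (forall a b, der (a + b) = der a + der b),
      (forall a b, der (a * b) = a * der b + b * der a),
      (forall r a, der (phi r * a) = phi r * der a) &
      [/\ delta 0 = 0,
        (forall m m', delta (m + m') = delta m + delta m'),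
        (forall n, delta (beta n) = 0) &
        (forall m, der (alphaX m) = alphaX m * delta m)]].

(* D^(p) = (der^{p-1} o delta + F_X^* o delta, der^p) *)
Definition logder_p_delta (A : comUnitRingType) (M : nmodType) (p : nat)
  (delta : M -> A) (der : A -> A) : M -> A :=
  fun m => iter p.-1 der (delta m) + (delta m) ^+ p.

Definition logder_p_der (A : comUnitRingType) (p : nat) (der : A -> A) : A -> A :=
  iter p der.

(* Main.v *)
Require Import Defs.
From HB Require Import structures.
From mathcomp Require Import all_boot all_order all_algebra ring.
Import GRing.Theory.
Local Open Scope ring_scope.

Set Implicit Arguments. Unset Strict Implicit.

Lemma pascal_sum (A : comUnitRingType) (g h : nat -> A) (n : nat) :
  \sum_(m < n.+2) (g m * h (n.+1 - m)%N) *+ 'C(n.+1, m) =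
  \sum_(m < n.+1) (g m.+1 * h (n - m)%N + g m * h (n.+1 - m)%N) *+ 'C(n, m).
Proof.
rewrite big_ord_recl /= subn0 bin0 mulr1n.
under eq_bigr => i _ do rewrite /= /bump /= add1n subSS binS mulrnDr.
rewrite big_split /= addrA.
under [X in _ = X]eq_bigr => i _ do rewrite mulrnDl.
rewrite big_split /= [RHS]addrC; congr (_ + _).
rewrite big_ord_recr /= bin_small // mulr0n addr0.
by rewrite [in RHS]big_ord_recl /= subn0 bin0 mulr1n.
Qed.

Lemma der0 (A : comUnitRingType) (D : A -> A) :
  (forall a b, D (a + b) = D a + D b) -> D 0 = 0.
Proof. move=> H; have h := H 0 0; rewrite addr0 in h.
by rewrite -[LHS](addrK (D 0)) -h subrr. Qed.

Lemma derMn (A : comUnitRingType) (D : A -> A) :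
  (forall a b, D (a + b) = D a + D b) -> forall a k, D (a *+ k) = D a *+ k.
Proof. move=> H a; elim=> [|k IH]; first by rewrite !mulr0n der0.
by rewrite !mulrS H IH. Qed.

Lemma der_sum (A : comUnitRingType) (D : A -> A) :
  (forall a b, D (a + b) = D a + D b) ->
  forall n (F : 'I_n -> A), D (\sum_(i < n) F i) = \sum_(i < n) D (F i).
Proof. move=> H; elim=> [|n IH] F; first by rewrite !big_ord0 der0.
by rewrite !big_ord_recr /= H IH. Qed.

Lemma iter_add (A : comUnitRingType) (D : A -> A) :
  (forall a b, D (a + b) = D a + D b) ->
  forall n a b, iter n D (a + b) = iter n D a + iter n D b.
Proof. by move=> H; elim=> //= n IH a b; rewrite IH H. Qed.

Lemma iter0 (A : comUnitRingType) (D : A -> A) :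
  (forall a b, D (a + b) = D a + D b) -> forall n, iter n D 0 = 0.
Proof. by move=> H; elim=> //= n ->; rewrite der0. Qed.

Lemma leibniz (A : comUnitRingType) (D : A -> A) :
  (forall a b, D (a + b) = D a + D b) ->
  (forall a b, D (a * b) = a * D b + b * D a) ->
  forall n a b, iter n D (a * b) =
    \sum_(m < n.+1) (iter m D a * iter (n - m)%N D b) *+ 'C(n, m).
Proof.
move=> Ha Hm; elim=> [|n IH] a b; first by rewrite big_ord1 /= mulr1n.
have P := @pascal_sum _ (fun m => iter m D a) (fun m => iter m D b) n.
rewrite /= in P; rewrite iterS IH der_sum //.
etransitivity; last exact: (esym P).
apply: eq_bigr => i _.
rewrite derMn // Hm; congr (_ *+ _).
have -> : (n.+1 - i = (n - i).+1)%N by rewrite subSn // -ltnS.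
by rewrite !iterS addrC [iter (n - i) D b * _]mulrC.
Qed.

Definition shf (A : comUnitRingType) (f : A) (F : nat -> A) (k : nat) : A :=
  if k is k'.+1 then f * F k' else 0.

Fixpoint cc (A : comUnitRingType) (D : A -> A) (f : A) (n i : nat) : A :=
  match n with 0 => (i == 0)%:R | n'.+1 => D (cc D f n' i) + shf f (cc D f n') i end.

Lemma ccS (A : comUnitRingType) (D : A -> A) f n i :
  cc D f n.+1 i = D (cc D f n i) + shf f (cc D f n) i.
Proof. by []. Qed.

Lemma der1 (A : comUnitRingType) (D : A -> A) :
  (forall a b, D (a + b) = D a + D b) ->
  (forall a b, D (a * b) = a * D b + b * D a) -> D 1 = 0.
Proof. move=> Ha Hm; have h := Hm 1 1; rewrite !mul1r in h.
by rewrite -[LHS](addrK (D 1)) -[in X in X - _]h subrr. Qed.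

Section CC.
Variables (A : comUnitRingType) (D : A -> A) (f : A).
Hypothesis Ha : forall a b, D (a + b) = D a + D b.
Hypothesis Hm : forall a b, D (a * b) = a * D b + b * D a.

Lemma cc_big n i : (n < i)%N -> cc D f n i = 0.
Proof.
elim: n i => [|n IH] [|i] //= Hi.
by rewrite IH 1?ltnW // (der0 Ha) add0r IH // mulr0.
Qed.

Lemma cc_0 n : cc D f n.+1 0 = 0.
Proof. elim: n => [|n IH] /=; rewrite /shf; first by rewrite (der1 Ha Hm) addr0.
by rewrite /= /shf in IH; rewrite IH (der0 Ha) !addr0. Qed.

Lemma cc_1 n : cc D f n.+1 1 = iter n D f.
Proof.
elim: n => [|n IH]; first by rewrite /= (der0 Ha) add0r mulr1.
by rewrite ccS IH /shf cc_0 mulr0 addr0.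
Qed.

Lemma cc_diag n : cc D f n n = f ^+ n.
Proof.
elim: n => [|n IH]; first by rewrite /= expr0.
by rewrite ccS /shf IH cc_big // (der0 Ha) add0r exprS.
Qed.

Lemma cc_x x : D x = x * f -> forall n,
  iter n D x = x * \sum_(i < n.+1) cc D f n i.
Proof.
move=> Hx; elim=> [|n IH]; first by rewrite big_ord1 /= mulr1.
rewrite iterS IH Hm Hx.
have -> : \sum_(i < n.+2) cc D f n.+1 i =
  \sum_(i < n.+2) D (cc D f n i) + \sum_(i < n.+2) shf f (cc D f n) i.
  by rewrite -big_split.
rewrite [X in _ = x * (X + _)]big_ord_recr /= cc_big // (der0 Ha) addr0 -der_sum //.
rewrite [X in _ = x * (_ + X)]big_ord_recl /= /shf /= add0r -mulr_sumr.
by rewrite mulrDr [_ * (x * f)]mulrC -mulrA.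
Qed.

Definition SS n k l := \sum_(m < n.+1) (cc D f m k * cc D f (n - m)%N l) *+ 'C(n, m).

Lemma shf_suml n k (X : nat -> A) :
  \sum_(m < n.+1) (shf f (cc D f m) k * X m) *+ 'C(n, m) =
  shf f (fun k => \sum_(m < n.+1) (cc D f m k * X m) *+ 'C(n, m)) k.
Proof.
case: k => [|k] /=; first by rewrite big1 // => i _; rewrite mul0r mul0rn.
by rewrite mulr_sumr; apply: eq_bigr => i _; rewrite mulrnAr mulrA.
Qed.

Lemma shf_sumr n l (X : nat -> A) (G : nat -> nat -> A) :
  \sum_(m < n.+1) (X m * shf f (G m) l) *+ 'C(n, m) =
  shf f (fun l => \sum_(m < n.+1) (X m * G m l) *+ 'C(n, m)) l.
Proof.
case: l => [|l] /=; first by rewrite big1 // => i _; rewrite mulr0 mul0rn.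
rewrite mulr_sumr; apply: eq_bigr => i _; rewrite mulrnAr.
by rewrite mulrA [X i * f]mulrC mulrA.
Qed.

Lemma SS_eq n : forall k l, SS n k l = cc D f n (k + l) *+ 'C(k + l, k).
Proof.
elim: n => [|n IH] k l.
  rewrite /SS big_ord1 /= mulr1n.
  by case: k => [|k]; case: l => [|l]; rewrite /= ?mulr1 ?mul0r ?mulr0 ?bin0 ?mul0rn.
rewrite /SS.
have P := @pascal_sum _ (fun m => cc D f m k) (fun m => cc D f m l) n.
rewrite /= in P; rewrite P.
have E : forall i : 'I_n.+1,
   ((D (cc D f i k) + shf f (cc D f i) k) * cc D f (n - i) l + cc D f i k * cc D f (n.+1 - i) l) *+ 'C(n, i)
   = (D (cc D f i k * cc D f (n - i) l)) *+ 'C(n, i)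
     + (shf f (cc D f i) k * cc D f (n - i) l) *+ 'C(n, i)
     + (cc D f i k * shf f (cc D f (n - i)) l) *+ 'C(n, i).
  move=> i; have -> : (n.+1 - i = (n - i).+1)%N by rewrite subSn // -ltnS.
  rewrite -!mulrnDl; congr (_ *+ _); rewrite Hm /= !mulrDr !mulrDl.
  ring.
under eq_bigr => i _ do rewrite E.
rewrite !big_split /=.
have -> : \sum_(i < n.+1) D (cc D f i k * cc D f (n - i) l) *+ 'C(n, i)
     = D (SS n k l).
  by rewrite /SS der_sum //; apply: eq_bigr => i _; rewrite derMn.
rewrite (shf_suml n k (fun m => cc D f (n - m) l)).
rewrite (shf_sumr n l (fun i => cc D f i k) (fun m => cc D f (n - m))).
change (D (SS n k l) + shf f (fun k0 => SS n k0 l) k + shf f (SS n k) l = cc D f n.+1 (k + l) *+ 'C(k + l, k)).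
clear P E; rewrite !IH (derMn Ha) ccS mulrnDl -!addrA; congr (_ + _).
case: k => [|k]; case: l => [|l]; rewrite /shf ?add0r ?addr0 //.
- by rewrite IH !add0n !bin0 !mulr1n.
- by rewrite IH !addn0 !binn !mulr1n.
have e : (k + l.+1 = k.+1 + l)%N by rewrite addnS.
have e2 : (k.+1 + l.+1 = (k.+1 + l).+1)%N by rewrite addnS.
rewrite !IH e e2 /= binS mulrnDr addrC.
by rewrite !mulrnAr.
Qed.
End CC.
Arguments cc : simpl never.

Lemma bin_vanish (A : comUnitRingType) (p m : nat) (x : A) :
  prime p -> p \in [pchar A] -> (0 < m < p)%N -> x *+ 'C(p, m) = 0.
Proof.
move=> Hp Hc Hm; rewrite -mulr_natr.
have /eqP -> : ('C(p, m)%:R : A) == 0 by rewrite -(dvdn_pcharf Hc) prime_dvd_bin.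
by rewrite mulr0.
Qed.

Lemma nat_cancel (A : comUnitRingType) (p i : nat) (x : A) :
  prime p -> p \in [pchar A] -> (0 < i < p)%N -> x *+ i = 0 -> x = 0.
Proof.
move=> Hp Hc /andP[Hi0 Hip] Hx.
have [a _ Hd] := Bezoutl i (prime_gt0 Hp).
have Hg : gcdn p i = 1%N.
  by apply/eqP; rewrite -/(coprime p i) prime_coprime // gtnNdvd.
rewrite Hg (dvdn_pcharf Hc) in Hd.
have : x * (1 + a * i)%:R = 0 by rewrite (eqP Hd) mulr0.
rewrite natrD natrM mulrDr mulr1 mulrCA mulr_natr Hx mulr0 addr0.
by [].
Qed.

Lemma hochschild (A : comUnitRingType) (p : nat) (D : A -> A) (x f : A) :
  prime p -> p \in [pchar A] ->
  (forall a b, D (a + b) = D a + D b) ->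
  (forall a b, D (a * b) = a * D b + b * D a) ->
  D x = x * f -> iter p D x = x * (iter p.-1 D f + f ^+ p).
Proof.
move=> Hp Hc Ha Hm Hx; rewrite (cc_x Ha Hm Hx); congr (_ * _).
have [q Eq] : exists q, p = q.+2.
  by exists p.-2; case: p Hp {Hc} => [|[|p]].
subst p.
have SS0 : forall l, (0 < l)%N -> SS D f q.+2 1 l = 0.
  move=> l Hl; rewrite /SS big_ord_recl big_ord_recr /= mul0r mul0rn add0r.
  rewrite /bump /= !add1n subnn.
  rewrite (_ : cc D f 0 l = 0); last by rewrite /cc eqn0Ngt Hl.
  rewrite mulr0 mul0rn addr0.
  apply: big1 => i _; apply: bin_vanish => //=.
  by rewrite ltnS.
rewrite big_ord_recl (@cc_0 A D f Ha Hm q.+1) add0r big_ord_recl big_ord_recr /=.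
rewrite /bump /= !add1n.
rewrite (@cc_1 A D f Ha Hm q.+1) (@cc_diag A D f Ha q.+2) big1 ?add0r //.
move=> i _; rewrite !add1n.
have := SS0 i.+1 isT; rewrite (@SS_eq A D f Ha Hm) add1n bin1.
apply: (nat_cancel Hp Hc).
by rewrite /= !ltnS ltn_ord.
Qed.

Theorem mainTheorem15 (p : nat) (R A : comUnitRingType) (N M : nmodType)
  (phi : {rmorphism R -> A}) (alphaS : N -> R) (alphaX : M -> A) (beta : N -> M)
  (delta : M -> A) (der : A -> A) :
  prime p -> p \in [pchar R] -> p \in [pchar A] ->
  is_log_structure alphaS -> integral_monoid N ->
  is_log_structure alphaX -> integral_monoid M ->
  is_log_morphism phi alphaS alphaX beta ->
  is_log_derivation phi alphaX beta delta der ->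
  is_log_derivation phi alphaX beta
    (logder_p_delta p delta der) (logder_p_der p der).
Proof.
move=> Hp _ Hc _ _ _ _ _ [Ha Hm Hphi [Hd0 HdD Hdb Hda]].
have p0 : p != 0%N by rewrite -lt0n prime_gt0.
have Frob : forall a b : A, (a + b) ^+ p = a ^+ p + b ^+ p.
  move=> a b; rewrite -!(pFrobenius_autE Hc) pFrobenius_autD_comm //.
  exact: mulrC.
rewrite /logder_p_der /logder_p_delta; split.
- exact: iter_add.
- move=> a b; rewrite (leibniz Ha Hm).
  have [q Eq] : exists q, p = q.+1 by exists p.-1; rewrite prednK // lt0n.
  rewrite Eq big_ord_recl big_ord_recr /= /bump /= !add1n subnn bin0 binn !mulr1n.
  rewrite big1 ?add0r; last first.
    move=> i _; apply: bin_vanish; rewrite -?Eq //.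
    by rewrite Eq add1n /= ltnS ltn_ord.
  by rewrite [_ * b]mulrC.
- move=> r a; elim: p {Hp Hc p0 Frob} => //= n ->; exact: Hphi.
split.
- by rewrite Hd0 iter0 // expr0n (negPf p0) addr0.
- move=> m m'; rewrite HdD iter_add // Frob; ring.
- by move=> n; rewrite Hdb iter0 // expr0n (negPf p0) addr0.
- by move=> m; apply: hochschild.
Qed.
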